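(* Let $\lambda:E_B\to\mathbb R_+$, let $\mathcal N_e$ be distributions on $\mathcal W_e$ ($e\in E_B$), let $n:V_B\to\mathbb N$ with $n_b=\#p_{\mathcal C}^{-1}(b)$ for $b\in I_B$, and let $(\mathcal G,w)$, $\mathcal G=(G,\pi,\mathrm{Id})$, be a random sparse lift of $\mathbb B$ along $(n,\lambda)$ with distribution $\mathcal N$. For $\delta\in(0,1]$ and $(a,b)\in E_B$ let $D_{(a,b)}=7\frac{n_b}{n_a}\lambda_{(a,b)}+\log n_a+\log\#E_B-\log\delta$. Then $\mathbb P\big(\forall(a,b)\in E_B,\ \sup_{v\in\pi^{-1}(a)}\#(G(v,-)\cap\pi^{-1}(b))\le D_{(a,b)}\big)\ge1-\delta$.
   Context: $B=(V_B,E_B)$ is a finite directed acyclic graph, with a perceptron module $\mathbb B$ over it whose input vertex set is $I_B\subseteq V_B$ and with weight spaces $\mathcal W_e$ (finite-dimensional real inner product spaces) for $e\in E_B$; $\mathcal C$ is a finite set with $p_{\mathcal C}:\mathcal C\to I_B$. For a graph $G$, $G(v,-)=\{u:(v,u)\in E\}$. Random sparse lift along $(n,\lambda)$ with distribution $\mathcal N$: identify $p_{\mathcal C}^{-1}(b)$ with $\{0,\dots,n_b-1\}$ for $b\in I_B$; vertices $V=\{(b,i):b\in V_B,0\le i<n_b\}$, $\pi(b,i)=b$, candidate edges $E_C=\{(u,v)\in V\times V:(\pi(u),\pi(v))\in E_B\}$; independent $m_{(u,v)}\sim\mathrm{Bernoulli}(\lambda_{\pi(u,v)}/n_{\pi(u)})$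 and $w_e\sim\mathcal N_{\pi(e)}$ for $e\in E_C$; $G=(V,\{e\in E_C:m_e=1\})$, $\mathcal G=(G,\pi,\mathrm{Id})$, weights restricted to edges of $G$. *)

(* Defs.v *)
From HB Require Import structures.
From mathcomp Require Import all_boot all_order all_algebra.
From mathcomp Require Import reals exp.

Set Implicit Arguments.
Unset Strict Implicit.
Unset Printing Implicit Defensive.

Import Order.TTheory GRing.Theory Num.Theory.
Local Open Scope ring_scope.

(* A finite directed graph (V_B, E_B) is a finType VB with an edge relation
   EB : rel VB.  It is acyclic iff no vertex reaches itself by a path of
   positive length. *)
Definition acyclic (T : finType) (e : rel T) : Prop :=
  forall x : T, ~~ [exists y, e x y && connect e y x].

Definition num_edges (VB : finType) (EB : rel VB) : nat :=
  #|[set x : VB * VB | EB x.1 x.2]|.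

(* Vertices of the lift: V = {(b,i) : b in V_B, 0 <= i < n_b}; pi = tag. *)
Definition liftV (VB : finType) (n : VB -> nat) : finType :=
  {b : VB & 'I_(n b)}.

Definition candE (VB : finType) (EB : rel VB) (n : VB -> nat) : finType :=
  {x : liftV n * liftV n | EB (tag x.1) (tag x.2)}.

(* A realisation of the Bernoulli masks (m_e)_{e in E_C}. *)
Definition config (VB : finType) (EB : rel VB) (n : VB -> nat) : finType :=
  {ffun candE EB n -> bool}.

Definition edge_prob (R : realType) (VB : finType) (EB : rel VB)
    (n : VB -> nat) (lam : VB -> VB -> R) (e : candE EB n) : R :=
  lam (tag (val e).1) (tag (val e).2) / (n (tag (val e).1))%:R.

Definition config_prob (R : realType) (VB : finType) (EB : rel VB)
    (n : VB -> nat) (lam : VB -> VB -> R) (m : config EB n) : R :=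
  \prod_(e : candE EB n)
     (if m e then edge_prob lam e else 1 - edge_prob lam e).

Definition lift_edge (VB : finType) (EB : rel VB) (n : VB -> nat)
    (m : config EB n) (u v : liftV n) : bool :=
  [exists e : candE EB n, (val e == (u, v)) && m e].

Definition out_deg_to (VB : finType) (EB : rel VB) (n : VB -> nat)
    (m : config EB n) (v : liftV n) (b : VB) : nat :=
  #|[set u : liftV n | (tag u == b) && lift_edge m v u]|.

Definition Dbound (R : realType) (VB : finType) (EB : rel VB)
    (n : VB -> nat) (lam : VB -> VB -> R) (delta : R) (a b : VB) : R :=
  7 * ((n b)%:R / (n a)%:R) * lam a b + ln (n a)%:R
  + ln (num_edges EB)%:R - ln delta.

(* The event: for all (a,b) in E_B, sup_{v in pi^{-1}(a)} #(...) <= D_{(a,b)}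
   (a sup over a finite set is <= D iff every element is). *)
Definition good_event (R : realType) (VB : finType) (EB : rel VB)
    (n : VB -> nat) (lam : VB -> VB -> R) (delta : R) (m : config EB n) : bool :=
  [forall a : VB, forall b : VB, EB a b ==>
     [forall v : liftV n, (tag v == a) ==>
        ((out_deg_to m v b)%:R <= Dbound EB n lam delta a b)]].

Definition prob_event (R : realType) (VB : finType) (EB : rel VB)
    (n : VB -> nat) (lam : VB -> VB -> R) (P : pred (config EB n)) : R :=
  \sum_(m : config EB n | P m) config_prob lam m.

(* Main.v *)
Require Import Defs.
From HB Require Import structures.
From mathcomp Require Import all_boot all_order all_algebra.
From mathcomp Require Import reals exp.
From mathcomp Require Import sequences.
From mathcomp Require Import ring lra.
Import Order.TTheory GRing.Theory Num.Theory.
Local Open Scope ring_scope.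

Lemma sum_prod_ffun (R : realType) (I : finType) (F : I -> bool -> R) :
  \sum_(m : {ffun I -> bool}) \prod_i F i (m i) = \prod_i (F i true + F i false).
Proof.
rewrite -bigA_distr_bigA; apply: eq_bigr => i _; by rewrite big_bool.
Qed.

Lemma expect_prod (R : realType) (VB : finType) (EB : rel VB) (n : VB -> nat)
   (lam : VB -> VB -> R) (h : candE EB n -> bool -> R) :
  \sum_(m : config EB n) config_prob lam m * \prod_e h e (m e) =
  \prod_e (edge_prob lam e * h e true + (1 - edge_prob lam e) * h e false).
Proof.
pose F := fun e b => (if b then edge_prob lam e else 1 - edge_prob lam e) * h e b.
transitivity (\prod_e (F e true + F e false)); last by apply: eq_bigr.
rewrite -sum_prod_ffun; apply: eq_bigr => m _.
rewrite /config_prob -big_split /=; apply: eq_bigr => e _.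
by case: (m e).
Qed.

Lemma expR1_le4 (R : realType) : expR (1 : R) <= 4.
Proof.
have h1 : (2^-1 : R) <= expR (- 2^-1).
  have := expR_ge1Dx (- (2^-1 : R)).
  suff -> : 1 + - (2^-1 : R) = 2^-1 by [].
  by field.
have h2 : expR (-1 : R) = expR (- 2^-1) ^+ 2.
  rewrite -expRM_natl; congr expR; by field.
have h3 : (4^-1 : R) <= expR (-1).
  rewrite h2; apply: le_trans (_ : (2^-1 : R) ^+ 2 <= _).
    rewrite expr2 -invfM; rewrite le_eqVlt; apply/orP; left; apply/eqP; congr (_^-1); lra.
  by rewrite lerXn2r // ?nnegrE // ?invr_ge0 // ?expR_ge0.
have : expR (1 : R) = (expR (-1))^-1 by rewrite expRN invrK.
move=> ->.
rewrite -[4 : R]invrK lef_pV2 ?posrE ?expR_gt0 //.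
by rewrite invr_gt0.
Qed.

Lemma fiber_card (VB : finType) (n : VB -> nat) (b : VB) :
  (#|[set u : liftV n | tag u == b]| <= n b)%N.
Proof.
apply: leq_trans (_ : #|[set (Tagged (fun c => 'I_(n c)) i : liftV n) | i : 'I_(n b)]| <= _)%N.
  apply: subset_leq_card; apply/subsetP => -[c i]; rewrite inE /= => /eqP Hc.
  subst c; apply/imsetP; by exists i.
by rewrite (leq_trans (leq_imset_card _ _)) // card_ord.
Qed.

Lemma edge_prob01 (R : realType) (VB : finType) (EB : rel VB) (n : VB -> nat)
   (lam : VB -> VB -> R) (e : candE EB n) :
  (forall a b, EB a b -> 0 <= lam a b) ->
  (forall a b, EB a b -> (0 < n a)%N -> lam a b <= (n a)%:R) ->
  0 <= edge_prob lam e <= 1.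
Proof.
move=> Hl0 Hl1; rewrite /edge_prob; case: e => [[u w] /= He].
have Hn : (0 < n (tag u))%N by case: u He => c i /= _; exact: (leq_ltn_trans (leq0n i) (ltn_ord i)).
have Hn' : 0 < (n (tag u))%:R :> R by rewrite ltr0n.
apply/andP; split; first by rewrite divr_ge0 // ?Hl0 // ler0n.
by rewrite ler_pdivrMr // mul1r Hl1.
Qed.

Lemma config_prob_ge0 (R : realType) (VB : finType) (EB : rel VB) (n : VB -> nat)
   (lam : VB -> VB -> R) (m : config EB n) :
  (forall a b, EB a b -> 0 <= lam a b) ->
  (forall a b, EB a b -> (0 < n a)%N -> lam a b <= (n a)%:R) ->
  0 <= config_prob lam m.
Proof.
move=> Hl0 Hl1; rewrite /config_prob; apply: prodr_ge0 => e _.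
have /andP[h0 h1] := @edge_prob01 _ _ _ _ lam e Hl0 Hl1.
by case: (m e) => //; rewrite subr_ge0.
Qed.

Lemma tail (R : realType) (VB : finType) (EB : rel VB) (n : VB -> nat)
   (lam : VB -> VB -> R) (a b : VB) (v : liftV n) (D : R) :
  (forall a b, EB a b -> 0 <= lam a b) ->
  (forall a b, EB a b -> (0 < n a)%N -> lam a b <= (n a)%:R) ->
  EB a b -> tag v = a ->
  \sum_(m : config EB n | D < (out_deg_to m v b)%:R) config_prob lam m
    <= expR (3 * ((n b)%:R / (n a)%:R * lam a b) - D).
Proof.
move=> Hl0 Hl1 Hab Hv.
pose rel (e : candE EB n) := ((val e).1 == v) && (tag (val e).2 == b).
set E1 := expR (1:R).
have E1ge1 : 1 <= E1 by apply: le_trans (expR_ge1Dx 1); rewrite lerDl.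
have E1le4 : E1 <= 4 by exact: expR1_le4.
have cp0 (m : config EB n) : 0 <= config_prob lam m by exact: (@config_prob_ge0 _ _ _ _ lam m Hl0 Hl1).
have Hdeg (m : config EB n) : (out_deg_to m v b <= #|[set e | rel e && m e]|)%N.
  rewrite /out_deg_to.
  apply: leq_trans (_ : #|[set (val e).2 | e in [set e | rel e && m e]]| <= _)%N; last exact: leq_imset_card.
  apply: subset_leq_card; apply/subsetP => u; rewrite inE => /andP[/eqP Hu /existsP[e /andP[/eqP He me]]].
  apply/imsetP; exists e; last by rewrite He.
  by rewrite inE /rel He /= Hu !eqxx me.
have Hprod (m : config EB n) : expR (#|[set e | rel e && m e]|%:R) = \prod_e (if rel e && m e then E1 else 1).
  rewrite -[X in expR X]mulr1 expRM_natl -prodr_const -big_mkcond /=.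
  by apply: eq_bigl => e; rewrite inE.
have prod0 (m : config EB n) : 0 <= \prod_e (if rel e && m e then E1 else 1).
  by apply: prodr_ge0 => e _; case: ifP => // _; apply: le_trans E1ge1.
apply: le_trans (_ : \sum_m config_prob lam m * (expR (- D) * \prod_e (if rel e && m e then E1 else 1)) <= _).
  rewrite big_mkcond /=; apply: ler_sum => m _; case: ifP => HD; last first.
    by rewrite mulr_ge0 // mulr_ge0 // expR_ge0.
  apply: ler_peMr => //; rewrite -Hprod -expRD -[X in X <= _]expR0 ler_expR addrC subr_ge0.
  apply: le_trans (ltW HD) _; by rewrite ler_nat.
rewrite (eq_bigr (fun m => expR (- D) * (config_prob lam m * \prod_e (if rel e && m e then E1 else 1)))); last by move=> m _; rewrite mulrCA.
rewrite -mulr_sumr.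
rewrite (@expect_prod _ _ _ _ lam (fun e bit => if rel e && bit then E1 else 1)).
rewrite expRD mulrC ler_wpM2r ?expR_ge0 //.
apply: le_trans (_ : \prod_e expR (if rel e then edge_prob lam e * 3 else 0) <= _).
  apply: ler_prod => e _; rewrite andbT andbF.
  have /andP[p0 p1] := @edge_prob01 _ _ _ _ lam e Hl0 Hl1.
  case: (rel e); apply/andP; split.
  - by apply: addr_ge0; apply: mulr_ge0; rewrite ?subr_ge0 //; apply: le_trans E1ge1.
  - apply: le_trans (expR_ge1Dx _); rewrite mulr1.
    have : edge_prob lam e * E1 <= edge_prob lam e * 4 by rewrite ler_wpM2l.
    lra.
  - by rewrite mulr1 mulr1 addrC subrK.
  - by rewrite mulr1 mulr1 addrC subrK expR0.
rewrite -expR_sum ler_expR -big_mkcond /=.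
have Hp : forall e, rel e -> edge_prob lam e * 3 = lam a b / (n a)%:R * 3.
  by move=> e /andP[/eqP H1 /eqP H2]; rewrite /edge_prob H1 H2 Hv.
rewrite (eq_bigr _ Hp).
have -> : \sum_(e | rel e) (lam a b / (n a)%:R * 3) = (lam a b / (n a)%:R * 3) *+ #|[set e | rel e]|.
  by rewrite -sumr_const; apply: eq_bigl => e; rewrite inE.
have K : (#|[set e | rel e]| <= n b)%N.
  rewrite -(@card_in_imset _ _ (fun e : candE EB n => (val e).2)); last first.
    move=> e1 e2; rewrite !inE => /andP[/eqP H1 _] /andP[/eqP H2 _] H12.
    by apply: val_inj; rewrite [val e1]surjective_pairing [val e2]surjective_pairing H1 H2 H12.
  apply: leq_trans _ (@fiber_card _ n b); apply: subset_leq_card; apply/subsetP => u /imsetP[e He ->].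
  by move: He; rewrite !inE => /andP[_ H2].
have c0 : 0 <= lam a b / (n a)%:R * 3 by rewrite mulr_ge0 // divr_ge0 // ?Hl0 // ler0n.
rewrite -mulr_natr; apply: le_trans (_ : lam a b / (n a)%:R * 3 * (n b)%:R <= _).
  by rewrite ler_wpM2l // ler_nat.
by rewrite le_eqVlt; apply/orP; left; apply/eqP; ring.
Qed.

Theorem lemma3 (R : realType) (VB : finType) (EB : rel VB) (IB : {set VB})
    (C : finType) (pC : C -> VB) (n : VB -> nat) (lam : VB -> VB -> R)
    (delta : R) :
  acyclic EB ->
  (forall c : C, pC c \in IB) ->
  (forall b, b \in IB -> n b = #|[set c : C | pC c == b]|) ->
  (forall a b, EB a b -> 0 <= lam a b) ->
  (forall a b, EB a b -> (0 < n a)%N -> lam a b <= (n a)%:R) ->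
  0 < delta -> delta <= 1 ->
  1 - delta <= prob_event (EB:=EB) (n:=n) lam (good_event (EB:=EB) (n:=n) lam delta).
Proof.
move=> _ _ _ Hl0 Hl1 dpos dle1.
have cp0 (m : config EB n) : 0 <= config_prob lam m by exact: (@config_prob_ge0 _ _ _ _ lam m Hl0 Hl1).
have tot : \sum_(m : config EB n) config_prob lam m = 1.
  have H := @expect_prod _ _ _ _ lam (fun _ _ => 1).
  transitivity (\sum_(m : config EB n) config_prob lam m * \prod_(e : candE EB n) (fun _ _ => (1:R)) e (m e)).
    by apply: eq_bigr => m _ /=; rewrite big1_eq mulr1.
  by rewrite H; apply: big1 => e _; rewrite !mulr1 addrC subrK.
pose good := good_event (EB:=EB) (n:=n) lam delta.
pose S := \sum_(m : config EB n | ~~ good m) config_prob lam m.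
have split : prob_event (EB:=EB) (n:=n) lam good + S = 1.
  by rewrite -tot [in RHS](bigID good) /=.
suff : S <= delta by lra.
pose E := (num_edges EB)%:R : R.
pose tr (t : (VB * VB) * liftV n) := EB t.1.1 t.1.2 && (tag t.2 == t.1.1).
pose bad (t : (VB * VB) * liftV n) (m : config EB n) :=
  Dbound EB n lam delta t.1.1 t.1.2 < (out_deg_to m t.2 t.1.2)%:R.
apply: le_trans (_ : \sum_(m : config EB n) \sum_(t | tr t) (if bad t m then config_prob lam m else 0) <= _).
  rewrite /S big_mkcond /=; apply: ler_sum => m _; case: ifP => Hg; last first.
    by apply: sumr_ge0 => t _; case: ifP.
  move: Hg => /forallPn [a /forallPn [b]]; rewrite negb_imply => /andP[Hab /forallPn [v]].
  rewrite negb_imply => /andP[/eqP Hv]; rewrite -ltNge => Hlt.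
  rewrite (bigD1 ((a, b), v)) /=; last by rewrite /tr /= Hab Hv eqxx.
  rewrite /bad /= Hlt lerDl; by apply: sumr_ge0 => t _; case: ifP.
rewrite exchange_big /=.
apply: le_trans (_ : \sum_(t | tr t) delta / ((n t.1.1)%:R * E) <= _).
  apply: ler_sum => -[[a b] v] /andP[/= Hab /eqP Hv]; rewrite -big_mkcond /=.
  apply: le_trans (@tail _ _ _ _ lam a b v _ Hl0 Hl1 Hab Hv) _.
  have na0 : (0 < n a)%N by rewrite -Hv; case: v {Hv} => c i /=; exact: (leq_ltn_trans (leq0n i) (ltn_ord i)).
  have na0' : 0 < (n a)%:R :> R by rewrite ltr0n.
  have E0 : 0 < E.
    rewrite /E ltr0n /num_edges; apply/card_gt0P; exists (a, b); by rewrite inE.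
  have -> : delta / ((n a)%:R * E) = expR (ln delta - ln (n a)%:R - ln E).
    rewrite !expRB !lnK ?posrE //; field.
    by apply/andP; split; apply: lt0r_neq0.
  rewrite ler_expR /Dbound -/E -mulrA.
  have : 0 <= (n b)%:R / (n a)%:R * lam a b by rewrite mulr_ge0 // ?Hl0 // divr_ge0 // ler0n.
  lra.
have -> : \sum_(t | tr t) delta / ((n t.1.1)%:R * E) =
   \sum_(ab | EB ab.1 ab.2) \sum_(v : liftV n | tag v == ab.1) delta / ((n ab.1)%:R * E).
  by rewrite pair_big_dep.
apply: le_trans (_ : \sum_(ab | EB ab.1 ab.2) delta / E <= _).
  apply: ler_sum => -[a b] /= Hab.
  have -> : \sum_(v : liftV n | tag v == a) delta / ((n a)%:R * E) = delta / ((n a)%:R * E) *+ #|[set v : liftV n | tag v == a]|.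
    by rewrite -sumr_const; apply: eq_bigl => v; rewrite inE.
  have E0 : 0 < E.
    rewrite /E ltr0n /num_edges; apply/card_gt0P; exists (a, b); by rewrite inE.
  have c0 : 0 <= delta / ((n a)%:R * E) by apply: divr_ge0; [exact: ltW | apply: mulr_ge0; [exact: ler0n | exact: ltW]].
  apply: le_trans (_ : delta / ((n a)%:R * E) *+ n a <= _).
    by rewrite -[X in X <= _]mulr_natr -[X in _ <= X]mulr_natr ler_wpM2l // ler_nat (@fiber_card _ n a).
  case: (posnP (n a)) => [-> | na0]; first by rewrite mulr0n divr_ge0 // ltW.
  have na0' : 0 < (n a)%:R :> R by rewrite ltr0n.
  rewrite -mulr_natl le_eqVlt; apply/orP; left; apply/eqP; field.
  by apply/andP; split; apply: lt0r_neq0.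
have -> : \sum_(ab | EB ab.1 ab.2) delta / E = delta / E *+ num_edges EB.
  by rewrite /num_edges -sumr_const; apply: eq_bigl => ab; rewrite inE.
case: (posnP (num_edges EB)) => [-> | E0]; first by rewrite mulr0n ltW.
have E0' : 0 < E by rewrite /E ltr0n.
rewrite -mulr_natl -/E le_eqVlt; apply/orP; left; apply/eqP; field.
by apply: lt0r_neq0.
Qed.
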